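(* Let $L\ge2$ and $0\le p<1$, and let $(\eta_n)_{n\ge0}$ be the Markov chain on $\{0,1\}^L$ with transition function $Q$, started from the stationary distribution $\pi(\omega)=Z^{-1}\prod_{j=0}^{|\omega|-1}c_j/c_{L-j-1}$. Define $\rho_n=\mathbb E_\pi[\eta_0(0)\eta_n(0)]$ and $\bar\rho_n=\rho_n-\frac14$. Then $\rho_0=\frac12$, $\rho_1=\rho_2=\dots=\rho_{L-1}$, for every $n\ge L$ $$\bar\rho_n=\frac{2p-1}{L}\sum_{j=1}^L\bar\rho_{n-j},$$ and $\bar\rho_n\to0$ exponentially fast as $n\to\infty$ (i.e. $|\bar\rho_n|\le Cr^n$ for some $C<\infty$, $r<1$).
   Context: $\Omega=\{0,1\}^L$, $\omega=(\omega(0),\dots,\omega(L-1))$, $|\omega|=\sum_j\omega(j)$. The transition function $Q$ is $Q\big(\eta,(\eta(1),\dots,\eta(L-1),s)\big)=\frac1L\big(|\eta|p+(L-|\eta|)(1-p)\big)$ for $s=1$, $=\frac1L\big((L-|\eta|)p+|\eta|(1-p)\big)$ for $s=0$, and $Q(\eta,\omega)=0$ otherwise. $c_j=(1-p)(1-\frac jL)+\frac jLp$ and $Z$ is a normalizing constant; this $\pi$ is stationary for $Q$. *)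

(* Defs.v *)
From HB Require Import structures.
From mathcomp Require Import all_boot all_order all_algebra.
Set Implicit Arguments. Unset Strict Implicit. Unset Printing Implicit Defensive.
Import Order.TTheory GRing.Theory Num.Theory.
Local Open Scope ring_scope.

Section Chain.
Variable R : rcfType.
Variable L : nat.
Variable p : R.

Definition config := {ffun 'I_L -> bool}.

Definition wt (w : config) : nat := (\sum_(j < L) (w j : nat))%N.

(* (eta(1),...,eta(L-1),s) *)
Definition shift (e : config) (s : bool) : config :=
  [ffun j : 'I_L => match (insub j.+1 : option 'I_L) with Some k => e k | None => s end].

Definition Q (e w : config) : R :=
  if w == shift e true then
    (L%:R)^-1 * ((wt e)%:R * p + (L - wt e)%:R * (1 - p))
  else if w == shift e false then
    (L%:R)^-1 * ((L - wt e)%:R * p + (wt e)%:R * (1 - p))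
  else 0.

Fixpoint Qn (n : nat) (e w : config) : R :=
  match n with
  | 0 => (e == w)%:R
  | n'.+1 => \sum_(z : config) Qn n' e z * Q z w
  end.

Definition c (j : nat) : R :=
  (1 - p) * (1 - j%:R / L%:R) + j%:R / L%:R * p.

Definition piw (w : config) : R :=
  \prod_(j < wt w) (c j / c (L - j - 1)).

Definition Z : R := \sum_(w : config) piw w.

Definition pi (w : config) : R := piw w / Z.

(* omega(0) as a real number (0 if L = 0) *)
Definition at0 (w : config) : R :=
  match (insub 0%N : option 'I_L) with Some i => (w i : nat)%:R | None => 0 end.

Definition rho (n : nat) : R :=
  \sum_(e : config) \sum_(w : config) pi e * at0 e * Qn n e w * at0 w.

Definition rhobar (n : nat) : R := rho n - 4^-1.

End Chain.

(* Main.v *)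
Require Import Defs.
From HB Require Import structures.
From mathcomp Require Import all_boot all_order all_algebra fingroup perm.
From mathcomp Require Import ring lra zify.
From Stdlib Require Import FunctionalExtensionality.
Set Implicit Arguments. Unset Strict Implicit. Unset Printing Implicit Defensive.
Import Order.TTheory GRing.Theory Num.Theory.
Local Open Scope ring_scope.

Lemma decay_block (R : realFieldType) (y : nat -> R) (N : nat) (th B : R) :
  (0 < N)%N -> 0 <= th -> th <= 1 -> (forall k, (k < N)%N -> `|y k| <= B) ->
  (forall n (M : R), (N <= n)%N -> (forall k, (n - N <= k < n)%N -> `|y k| <= M) ->
     `|y n| <= th * M) ->
  forall n, `|y n| <= B * th ^+ (n %/ N).
Proof.
move=> N0 th0 th1 hB hstep n.
have B0 : 0 <= B := le_trans (normr_ge0 _) (hB 0%N N0).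
elim/ltn_ind: n => n IH.
case: (ltnP n N) => hn.
  by rewrite divn_small // expr0 mulr1; exact: hB.
apply: le_trans (hstep n (B * th ^+ ((n - N) %/ N)%N) hn _) _.
  move=> k /andP[h1 h2]; apply: le_trans (IH k h2) _.
  apply: (ler_wpM2l B0); apply: ler_wiXn2l => //; exact: leq_div2r.
rewrite mulrCA -exprS.
have -> : ((n - N) %/ N).+1 = (n %/ N)%N.
  by rewrite -{2}(subnK hn) divnDr ?dvdnn // divnn N0 addn1.
by [].
Qed.

Lemma bernoulli_ge (R : realFieldType) (t : R) (n : nat) :
  0 <= t -> t <= 1 -> 1 - n%:R * t <= (1 - t) ^+ n.
Proof.
move=> t0 t1; elim: n => [|n IH]; first by rewrite mul0r subr0 expr0.
rewrite exprS.
apply: le_trans (_ : (1 - t) * (1 - n%:R * t) <= _); last first.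
  by apply: ler_wpM2l; lra.
have hn : 0 <= n%:R :> R := ler0n _ _.
rewrite -natr1.
have : 0 <= n%:R * (t * t) by apply: mulr_ge0 => //; apply: mulr_ge0.
lra.
Qed.

Lemma geo_bound (R : realFieldType) (y : nat -> R) (N : nat) (th B : R) :
  (0 < N)%N -> 0 <= th -> th < 1 -> (forall n, `|y n| <= B * th ^+ (n %/ N)) ->
  exists C r : R, [/\ 0 <= r, r < 1 & forall n, `|y n| <= C * r ^+ n].
Proof.
move=> N0 th0 th1 hy.
have B0 : 0 <= B.
  have := hy 0%N; rewrite div0n expr0 mulr1; exact: le_trans (normr_ge0 _).
set x : R := (N.+1)%:R.
have x1 : 1 < x by rewrite /x ltr1n ltnS.
have x0 : 0 < x by lra.
have xn0 : x != 0 by rewrite gt_eqF.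
set u := (1 - th) / x.
have u0 : 0 < u by rewrite /u divr_gt0 //; lra.
have ux : u * x = 1 - th by rewrite /u mulfVK.
have ur : u < 1.
  rewrite -(ltr_pM2r x0) mul1r ux; lra.
set r := 1 - u.
have r0 : 0 < r by rewrite /r; lra.
have r1 : r < 1 by rewrite /r; lra.
have rN : th <= r ^+ N.
  apply: le_trans (bernoulli_ge N (ltW u0) (ltW ur)).
  have : N%:R * u <= u * x.
    by rewrite mulrC ler_wpM2l ?(ltW u0) // /x ler_nat.
  lra.
exists (B / r ^+ N), r; split => //; first exact: ltW.
move=> n; apply: le_trans (hy n) _.
have rNp : 0 < r ^+ N by exact: exprn_gt0.
rewrite -mulrA; apply: (ler_wpM2l B0); rewrite mulrC.
rewrite ler_pdivlMr //.
apply: le_trans (_ : r ^+ (N * (n %/ N)) * r ^+ N <= _).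
  apply: ler_wpM2r; first exact: ltW.
  rewrite exprM; apply: lerXn2r => //; rewrite qualifE /=.
  by apply: exprn_ge0; apply: ltW.
rewrite -exprD; apply: ler_wiXn2l; [exact: ltW|exact: ltW|].
have := ltn_pmod n N0; have := divn_eq n N; lia.
Qed.

Lemma theta_lt1 (R : realFieldType) (L : nat) (a d : R) :
  (2 <= L)%N -> -1 <= a -> a < 1 -> d = a / L%:R ->
  `|d| * (`|1 + d| * (L.-1)%:R + `|d|) < 1.
Proof.
move=> L2 a1 a2 ->.
set x : R := L%:R.
have x2 : 2 <= x by rewrite /x ler_nat.
have x0 : x != 0 by rewrite gt_eqF //; lra.
have hL1 : (L.-1)%:R = x - 1 by rewrite /x -subn1 natrB //; lia.
have h1d : 1 + a / x = (x + a) / x by field.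
have e1 : `|1 + a / x| = 1 + a / x by rewrite ger0_norm // h1d divr_ge0 //; lra.
rewrite e1 hL1.
have hd : `|a / x| = `|a| / x by rewrite normrM normfV (ger0_norm (ler0n _ _)).
rewrite hd h1d.
have -> : `|a| / x * ((x + a) / x * (x - 1) + `|a| / x)
          = `|a| * ((x + a) * (x - 1) + `|a|) / (x * x) by field.
have xx : 0 < x * x by apply: mulr_gt0; lra.
rewrite ltr_pdivrMr // mul1r.
case: (lerP 0 a) => ha.
  rewrite ger0_norm //.
  have : 0 < (1 - a) * x * (x + a) by apply: mulr_gt0; [apply: mulr_gt0|]; lra.
  have -> : (1 - a) * x * (x + a) = x * x - a * ((x + a) * (x - 1) + a) by ring.
  lra.
rewrite ltr0_norm //.
have h3 : 0 <= (1 + a) * (x * x) by apply: mulr_ge0; [lra| apply: ltW].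
have h4 : 0 <= a * a * (x - 2) by apply: mulr_ge0; [apply: mulr_le0; lra| lra].
have h5 : 0 < - a * x by apply: mulr_gt0; lra.
have -> : - a * ((x + a) * (x - 1) + - a)
   = x * x - ((1 + a) * (x * x) + a * a * (x - 2) + - a * x) by ring.
lra.
Qed.

Lemma rec_decay (R : realFieldType) (y : nat -> R) (L : nat) (a : R) :
  (2 <= L)%N -> -1 <= a -> a < 1 ->
  (forall n, (L <= n)%N -> y n = a / L%:R * \sum_(1 <= j < L.+1) y (n - j)%N) ->
  exists C r : R, [/\ 0 <= r, r < 1 & forall n, `|y n| <= C * r ^+ n].
Proof.
move=> L2 a1 a2 hrec.
set d := a / L%:R.
set th := `|d| * (`|1 + d| * (L.-1)%:R + `|d|).
have th1 : th < 1 by apply: (theta_lt1 L2 a1 a2).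
have th0 : 0 <= th.
  by apply: mulr_ge0 => //; apply: addr_ge0 => //; apply: mulr_ge0.
apply: (@geo_bound R y L.+1 th (\sum_(k < L.+1) `|y k|)) => //.
apply: decay_block => //; first exact: ltW.
  move=> k hk; rewrite (bigD1 (Ordinal hk)) //= lerDl.
  by apply: sumr_ge0 => i _.
move=> n M hn hM.
have hL : (L <= n)%N by lia.
have hL1 : (L <= n.-1)%N by lia.
set S2 := \sum_(2 <= j < L.+1) y (n - j)%N.
have e1 : y n = d * (y (n - 1)%N + S2).
  have h1L : (1 < L.+1)%N by lia.
  by rewrite {1}hrec // (big_ltn h1L).
have e2 : y (n - 1)%N = d * (S2 + y (n - L.+1)%N).
  rewrite -subn1 in hL1.
  have h0L : (0 < L)%N by lia.
  rewrite {1}hrec // big_nat_recr //= /d; congr (_ * (_ + _)); last first.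
    by congr y; lia.
  rewrite /S2 [RHS]big_add1 /=.
  apply: eq_big_nat => i /andP[h1 h2]; congr y; lia.
have eS : `|S2| <= (L.-1)%:R * M.
  apply: le_trans (ler_norm_sum _ _ _) _.
  apply: le_trans (_ : \sum_(2 <= j < L.+1) M <= _).
    apply: ler_sum_nat => j /andP[h1 h2]; apply: hM; lia.
  by rewrite sumr_const_nat mulr_natl; have -> : (L.+1 - 2 = L.-1)%N by lia.
have eM : `|y (n - L.+1)%N| <= M by apply: hM; lia.
clearbody d; rewrite e1.
have -> : y (n - 1)%N + S2 = (1 + d) * S2 + d * y (n - L.+1)%N.
  by rewrite e2; ring.
rewrite normrM /th -[X in _ <= X]mulrA; apply: (ler_wpM2l (normr_ge0 _)).
rewrite [X in _ <= X]mulrDl -[_ * _ * M]mulrA; apply: le_trans (ler_normD _ _) _.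
rewrite !normrM; apply: lerD.
  by apply: (ler_wpM2l (normr_ge0 _)).
by apply: (ler_wpM2l (normr_ge0 _)).
Qed.

Section Chain2.
Variable R : rcfType.
Variable L : nat.
Variable p : R.
Hypothesis hL : (2 <= L)%N.
Hypothesis hp0 : 0 <= p.
Hypothesis hp1 : p < 1.

Definition bit (k : nat) (w : config L) : R :=
  match (insub k : option 'I_L) with Some i => (w i : nat)%:R | None => 0 end.

Definition q1 (e : config L) : R :=
  (L%:R)^-1 * ((wt e)%:R * p + (L - wt e)%:R * (1 - p)).
Definition q0 (e : config L) : R :=
  (L%:R)^-1 * ((L - wt e)%:R * p + (wt e)%:R * (1 - p)).

Definition P (h : config L -> R) : config L -> R :=
  fun e => q1 e * h (shift e true) + q0 e * h (shift e false).

Lemma Lnz : (L%:R : R) != 0.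
Proof. by rewrite pnatr_eq0; lia. Qed.

Lemma wt_le (e : config L) : (wt e <= L)%N.
Proof.
rewrite /wt -[X in (_ <= X)%N]card_ord -sum1_card.
by apply: leq_sum => j _; exact: leq_b1.
Qed.

Lemma q01 (e : config L) : q1 e + q0 e = 1.
Proof.
rewrite /q1 /q0 natrB ?wt_le //.
by have := Lnz; move=> h; field.
Qed.

Lemma bitO (i : 'I_L) (w : config L) : bit i w = (w i : nat)%:R.
Proof. by rewrite /bit valK. Qed.

Lemma bitE k (hk : (k < L)%N) (w : config L) : bit k w = (w (Ordinal hk) : nat)%:R.
Proof. by rewrite -bitO. Qed.

Lemma bit_shift k (hk : (k < L)%N) (e : config L) (s : bool) :
  bit k (shift e s) = if (k.+1 < L)%N then bit k.+1 e else (s : nat)%:R.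
Proof.
rewrite bitE /shift ffunE /=.
case: (ltnP k.+1 L) => h.
  by rewrite insubT bitE.
by rewrite insubF //; apply/negbTE; rewrite -leqNgt.
Qed.

Lemma shift_neq (e : config L) : shift e true != shift e false.
Proof.
have hk : (L.-1 < L)%N by lia.
apply/eqP => /(congr1 (fun f : config L => bit L.-1 f)).
rewrite !bit_shift // (_ : (L.-1.+1 < L)%N = false) /=; last by lia.
by move/eqP; rewrite eqr_nat.
Qed.

Lemma sumQ (e : config L) (h : config L -> R) : \sum_z Q p e z * h z = P h e.
Proof.
rewrite (bigD1 (shift e true)) //= (bigD1 (shift e false)) /=; last first.
  by rewrite eq_sym shift_neq.
rewrite big1 ?addr0; last first.
  move=> z /andP[h1 h2]; rewrite /Q (negbTE h1) (negbTE h2) mul0r //.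
rewrite /Q eqxx eq_sym (negbTE (shift_neq e)) eqxx.
by rewrite /P /q1 /q0.
Qed.

Lemma EQn n (g : config L -> R) (e : config L) :
  \sum_w Qn p n e w * g w = iter n P g e.
Proof.
elim: n g e => [|n IH] g e /=.
  rewrite (bigD1 e) //= eqxx mul1r big1 ?addr0 // => w hw.
  by rewrite eq_sym (negbTE hw) mul0r.
under eq_bigr => w _ do rewrite mulr_suml.
rewrite exchange_big /=.
under eq_bigr => z _ do (under eq_bigr => w _ do rewrite -mulrA; rewrite -mulr_sumr sumQ).
by rewrite IH -iterSr.
Qed.

Lemma rhoE n : rho L p n = \sum_(e : config L) Defs.pi p e * at0 R e * iter n P (bit 0) e.
Proof.
rewrite /rho; apply: eq_bigr => e _.
rewrite -EQn mulr_sumr; apply: eq_bigr => w _; rewrite !mulrA //.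
Qed.

Lemma P_bit k (hk : (k.+1 < L)%N) : P (bit k) = bit k.+1.
Proof.
apply: functional_extensionality => e.
by rewrite /P !bit_shift ?hk ?(ltnW hk) // -mulrDl q01 mul1r.
Qed.

Lemma iter_bit k : (k < L)%N -> iter k P (bit 0) = bit k.
Proof.
elim: k => [//|k IH] hk.
by rewrite iterS IH ?P_bit //; lia.
Qed.

Lemma sum_bit (e : config L) : \sum_(i < L) bit i e = (wt e)%:R.
Proof.
by rewrite /wt natr_sum; apply: eq_bigr => i _; rewrite bitO.
Qed.

Lemma P_last : P (bit L.-1) =
  fun e => (1 - p) + (2 * p - 1) / L%:R * \sum_(i < L) bit i e.
Proof.
apply: functional_extensionality => e.
have hk : (L.-1 < L)%N by lia.
rewrite /P !bit_shift // (_ : (L.-1.+1 < L)%N = false) /=; last by lia.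
rewrite mulr1 mulr0 addr0 sum_bit /q1 natrB ?wt_le //.
by have := Lnz => h; field.
Qed.

Lemma P_lin c k (f : 'I_L -> config L -> R) :
  P (fun e => c + k * \sum_i f i e) = fun e => c + k * \sum_i P (f i) e.
Proof.
apply: functional_extensionality => e.
rewrite /P big_split /= -!mulr_sumr.
have h := q01 e.
rewrite -[c in RHS]mul1r -h; ring.
Qed.

Lemma iter_lin j c k (f : 'I_L -> config L -> R) :
  iter j P (fun e => c + k * \sum_i f i e) =
  fun e => c + k * \sum_i iter j P (f i) e.
Proof.
elim: j => [//|j IH].
by rewrite iterS IH P_lin.
Qed.

Lemma iter_big n : (L <= n)%N -> iter n P (bit 0) =
  fun e => (1 - p) + (2 * p - 1) / L%:R * \sum_(i < L) iter (n - L + i) P (bit 0) e.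
Proof.
move=> hn.
rewrite -{1}(subnK hn) iterD.
have -> : iter L P (bit 0) = P (bit L.-1).
  have hL1 : L.-1.+1 = L by lia.
  by rewrite -[X in iter X P _]hL1 iterS iter_bit //; lia.
rewrite P_last iter_lin.
apply: functional_extensionality => e; congr (_ + _ * _).
apply: eq_bigr => i _.
by rewrite iterD iter_bit.
Qed.

Definition E0 : R := \sum_(e : config L) Defs.pi p e * at0 R e.

Lemma rho_rec n : (L <= n)%N -> rho L p n =
  (1 - p) * E0 + (2 * p - 1) / L%:R * \sum_(i < L) rho L p (n - L + i).
Proof.
move=> hn.
rewrite rhoE iter_big //.
under eq_bigr => e _ do rewrite mulrDr.
rewrite big_split /= /E0 mulr_sumr; congr (_ + _).
  by apply: eq_bigr => e _; ring.
rewrite mulr_sumr.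
under [RHS]eq_bigr => i _ do rewrite rhoE mulr_sumr.
rewrite exchange_big /=; apply: eq_bigr => e _.
rewrite !mulr_sumr; apply: eq_bigr => i _; ring.
Qed.

Lemma c_gt0 j : (j < L)%N -> 0 < c L p j.
Proof.
move=> hj; rewrite /c.
have L0 : (0 : R) < L%:R by rewrite ltr0n; lia.
have h1 : j%:R / L%:R < (1 : R) by rewrite ltr_pdivrMr // mul1r ltr_nat.
have h2 : 0 <= j%:R / L%:R :> R by apply: divr_ge0.
have h3 : 0 < (1 - p) * (1 - j%:R / L%:R).
  by apply: mulr_gt0; rewrite subr_gt0.
have h4 : 0 <= j%:R / L%:R * p by apply: mulr_ge0.
lra.
Qed.

Definition g (j : nat) : R := c L p j / c L p (L - j - 1).

Lemma g_gt0 j : (j < L)%N -> 0 < g j.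
Proof. by move=> hj; rewrite /g divr_gt0 // c_gt0 //; lia. Qed.

Lemma gg j : (j < L)%N -> g j * g (L - 1 - j) = 1.
Proof.
move=> hj; rewrite /g (_ : (L - (L - 1 - j) - 1 = j)%N); last by lia.
rewrite (_ : (L - j - 1 = L - 1 - j)%N); last by lia.
have h1 := c_gt0 hj.
have h2 : 0 < c L p (L - 1 - j) by apply: c_gt0; lia.
have n1 : c L p j != 0 by rewrite gt_eqF.
have n2 : c L p (L - 1 - j) != 0 by rewrite gt_eqF.
by field; rewrite n1 n2.
Qed.

Definition f (k : nat) : R := \prod_(0 <= j < k) g j.
Definition rr (k : nat) : R := \prod_(0 <= j < k) g (L - 1 - j).

Lemma f_gt0 k : (k <= L)%N -> 0 < f k.
Proof. by move=> hk; rewrite /f /rr big_seq; apply: prodr_gt0 => j; rewrite mem_index_iota => /andP[_ hj]; apply: g_gt0; lia. Qed.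

Lemma rr_gt0 k : (k <= L)%N -> 0 < rr k.
Proof. by move=> hk; rewrite /f /rr big_seq; apply: prodr_gt0 => j; rewrite mem_index_iota => /andP[_ hj]; apply: g_gt0; lia. Qed.

Lemma frr k : (k <= L)%N -> f k * rr k = 1.
Proof.
move=> hk; rewrite /f /rr -big_split /=; apply: big1_seq => j.
rewrite mem_index_iota => /andP[_ hj]; apply: gg; lia.
Qed.

Lemma frrL k : (k <= L)%N -> f (L - k) * rr k = f L.
Proof.
elim: k => [|k IH] hk; first by rewrite subn0 /rr big_nil mulr1.
have e : (L - k = (L - k.+1).+1)%N by lia.
rewrite -IH; last by lia.
rewrite e /f /rr !big_nat_recr //= (_ : (L - 1 - k = L - k.+1)%N); last by lia.
ring.
Qed.

Lemma fL : f L = 1.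
Proof.
have h1 := frr (leqnn L).
have h2 := frrL (leqnn L).
rewrite subnn /f big_nil mul1r -/(f L) in h2.
rewrite h2 in h1.
have h3 := f_gt0 (leqnn L).
have : (f L - 1) * (f L + 1) = 0.
  rewrite (_ : (f L - 1) * (f L + 1) = f L * f L - 1); last by ring.
  by move: h1; rewrite /f /rr => ->; rewrite subrr.
move=> /eqP; rewrite mulf_eq0 => /orP[] /eqP h; lra.
Qed.

Lemma f_sym k : (k <= L)%N -> f (L - k) = f k.
Proof.
move=> hk; have h1 := frr hk; have h2 := frrL hk.
rewrite fL -h1 in h2.
have h3 := rr_gt0 hk.
by apply: (mulIf (lt0r_neq0 h3)).
Qed.

Lemma piwE (w : config L) : piw p w = f (wt w).
Proof. by rewrite /piw /f big_mkord. Qed.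

Definition fl (e : config L) : config L := [ffun i => ~~ e i].

Lemma fl_inj : injective fl.
Proof.
move=> e1 e2 h; apply/ffunP => i.
by have := congr1 (fun e : config L => e i) h; rewrite !ffunE => /negb_inj.
Qed.

Lemma wt_fl (e : config L) : wt (fl e) = (L - wt e)%N.
Proof.
have : (wt (fl e) + wt e = L)%N.
  rewrite /wt -big_split /= -[RHS]card_ord -sum1_card.
  by apply: eq_bigr => i _; rewrite ffunE; case: (e i).
lia.
Qed.

Lemma Z_gt0 : 0 < Z L p.
Proof.
rewrite /Z (bigD1 [ffun _ => false]) //=.
have h1 : 0 < piw p [ffun _ : 'I_L => false].
  by rewrite piwE; apply: f_gt0; apply: wt_le.
apply: (lt_le_trans h1); rewrite lerDl.
by apply: sumr_ge0 => i _; rewrite piwE; apply: ltW; apply: f_gt0; apply: wt_le.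
Qed.

Lemma sum_pi : \sum_(e : config L) Defs.pi p e = 1.
Proof.
rewrite /Defs.pi -mulr_suml -/(Z L p) divff //; exact: lt0r_neq0 Z_gt0.
Qed.

Lemma pi_fl (e : config L) : Defs.pi p (fl e) = Defs.pi p e.
Proof. by rewrite /Defs.pi !piwE wt_fl f_sym // wt_le. Qed.

Lemma at0_bit (e : config L) : at0 R e = bit 0 e.
Proof. by []. Qed.

Lemma E0_half : E0 = 2^-1.
Proof.
have h : E0 = 1 - E0.
  rewrite {1}/E0 (reindex_inj fl_inj) /=.
  rewrite -sum_pi /E0 -sumrB; apply: eq_bigr => e _.
  have h0 : (0 < L)%N by lia.
  rewrite pi_fl !at0_bit !(bitE h0) ffunE.
  by case: (e _); rewrite /= ?mulr1 ?mulr0 ?subr0 ?subrr.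
have : E0 * 2 = 1 by rewrite mulrDr mulr1 {1}h; ring.
move=> h2; have n2 : (2:R) != 0 by rewrite pnatr_eq0.
by rewrite -[E0](mulfK n2) h2 mul1r.
Qed.

Lemma rho0 : rho L p 0 = 2^-1.
Proof.
rewrite rhoE -E0_half /E0; apply: eq_bigr => e _ /=.
have h0 : (0 < L)%N by lia.
rewrite at0_bit (bitE h0).
by case: (e _); rewrite /= ?mulr1 ?mulr0.
Qed.

Lemma rho_const n : (1 <= n <= L - 1)%N -> rho L p n = rho L p 1.
Proof.
move=> /andP[hn1 hn2].
have hn : (n < L)%N by lia.
have h1 : (1 < L)%N by lia.
have h0 : (0 < L)%N by lia.
rewrite !rhoE !iter_bit //.
set i1 : 'I_L := Ordinal h1.
set iN : 'I_L := Ordinal hn.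
set i0 : 'I_L := Ordinal h0.
set sw := tperm i1 iN.
pose T (e : config L) : config L := [ffun i => e (sw i)].
have TK : cancel T T by move=> e; apply/ffunP => i; rewrite !ffunE tpermK.
have Tinj : injective T := can_inj TK.
have wtT e : wt (T e) = wt e.
  rewrite /wt [in RHS](reindex_inj (@perm_inj _ sw)) /=.
  by apply: eq_bigr => i _; rewrite ffunE.
rewrite [LHS](reindex_inj Tinj) /=; apply: eq_bigr => e _.
have piT : Defs.pi p (T e) = Defs.pi p e by rewrite /Defs.pi !piwE wtT.
rewrite piT !at0_bit !(bitE h0) !(bitE hn) (bitE h1) !ffunE.
rewrite -/i0 -/iN -/i1 tpermR tpermD //.
by apply/eqP => /(congr1 val) /=; lia.
Qed.

Lemma rhobar_rec n : (L <= n)%N ->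
  rhobar L p n = (2 * p - 1) / L%:R * \sum_(1 <= j < L.+1) rhobar L p (n - j).
Proof.
move=> hn.
rewrite /rhobar rho_rec // E0_half.
have hs : \sum_(i < L) rho L p (n - L + i) = \sum_(1 <= j < L.+1) rho L p (n - j).
  rewrite -[LHS](big_mkord (fun _ => true) (fun i => rho L p (n - L + i))) big_nat_rev [RHS]big_add1 /=.
  by apply: eq_big_nat => i /andP[_ hi]; congr rho; lia.
rewrite hs sumrB sumr_const_nat subn1 /= -mulr_natr.
by have := Lnz => h; field.
Qed.

Lemma main_sec :
  [/\ rho L p 0 = 2^-1,
      (forall n : nat, (1 <= n <= L - 1)%N -> rho L p n = rho L p 1),
      (forall n : nat, (L <= n)%N ->
         rhobar L p n = (2 * p - 1) / L%:R * \sum_(1 <= j < L.+1) rhobar L p (n - j))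
    & exists C r : R, [/\ 0 <= r, r < 1 &
         forall n : nat, `|rhobar L p n| <= C * r ^+ n]].
Proof.
split.
- exact: rho0.
- exact: rho_const.
- exact: rhobar_rec.
- apply: (@rec_decay R (rhobar L p) L (2 * p - 1) hL _ _ rhobar_rec).
  all: move: hp0 hp1 => h0 h1 /=; lra.
Qed.

End Chain2.

Theorem mainTheorem15 (R : rcfType) (L : nat) (p : R)
  (hL : (2 <= L)%N) (hp0 : 0 <= p) (hp1 : p < 1) :
  [/\ rho L p 0 = 2^-1,
      (forall n : nat, (1 <= n <= L - 1)%N -> rho L p n = rho L p 1),
      (forall n : nat, (L <= n)%N ->
         rhobar L p n = (2 * p - 1) / L%:R * \sum_(1 <= j < L.+1) rhobar L p (n - j))
    & exists C r : R, [/\ 0 <= r, r < 1 &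
         forall n : nat, `|rhobar L p n| <= C * r ^+ n]].
Proof. exact: main_sec hL hp0 hp1. Qed.
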